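(* Let $\mathcal{M}$ be a uniform oriented matroid of rank $r=m-n$ on the ground set $[m]=\{1,\ldots,m\}$, with set of cocircuits $\mathcal{C}^\ast$ (uniform meaning every cocircuit has support of cardinality $m-r+1=n+1$). Identify each cocircuit $\tau$ with an $n$-dimensional face of the boundary $\partial\lozenge^m$ of the crosspolytope $\lozenge^m=\mathrm{conv}\{\pm e_1,\ldots,\pm e_m\}$, and for each $\tau\in\mathcal{C}^\ast$ let $\hat\tau$ be the $\mathbb{Z}_2$-valued simplicial cochain on $\partial\lozenge^m$ with $\hat\tau(\tau)=1$ and $\hat\tau(\theta)=0$ for every face $\theta\neq\tau$. Then the $n$-dimensional $\mathbb{Z}_2$-equivariant cochain $$ C_{\mathcal{M}}:=\sum_{\tau\in\mathcal{C}^\ast}\hat\tau\in C^n_{\mathbb{Z}_2}(\partial\lozenge^m;\mathbb{Z}_2) $$ is a cocycle representing the class $w_1^n\in H^n_{\mathbb{Z}_2}(\partial\lozenge^m;\mathbb{Z}_2)\cong H^n(\mathbb{R}P^{m-1};\mathbb{Z}_2)$, where $w_1$ is the first Stiefel–Whitney class of the free $\mathbb{Z}_2$-space $\partial\lozenge^m\cong S^{m-1}$ (antipodal action).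
   Context: A cocircuit $X\in\{0,+,-\}^m$ is identified with the face $\mathrm{conv}\{\,\mathrm{sign}(X_i)e_i : X_i\neq0\,\}$ of $\lozenge^m$, where $+e_i$ and $-e_i$ correspond to signs $+$ and $-$. The simplicial complex $\partial\lozenge^m$ carries the free involution $x\mapsto -x$; $\mathbb{Z}_2$-equivariant (invariant) cochains are identified with cochains on the quotient $\partial\lozenge^m/\mathbb{Z}_2\cong\mathbb{R}P^{m-1}$, and $w_1$ is the first Stiefel–Whitney class of the double cover $S^{m-1}\to\mathbb{R}P^{m-1}$ (the generator of $H^1(\mathbb{R}P^{m-1};\mathbb{Z}_2)$). *)

(* Defs.v *)
From HB Require Import structures.
From mathcomp Require Import all_boot all_algebra.

Set Implicit Arguments.
Unset Strict Implicit.
Unset Printing Implicit Defensive.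

Import GRing.Theory.
Local Open Scope ring_scope.

(* Sign vectors in {0,+,-}^m : None = 0, Some true = +, Some false = - . *)
Definition signvec (m : nat) := {ffun 'I_m -> option bool}.

Section SignVectors.
Variable m : nat.
Implicit Types (X Y Z : signvec m).

Definition supp X : {set 'I_m} := [set i | X i != None].
Definition posp X : {set 'I_m} := [set i | X i == Some true].
Definition negp X : {set 'I_m} := [set i | X i == Some false].
Definition opp_sv X : signvec m := [ffun i => omap negb (X i)].
Definition zero_sv : signvec m := [ffun => None].

(* Cocircuit axioms of an oriented matroid on the ground set [m]
   (Bjorner--Las Vergnas--Sturmfels--White--Ziegler, Def. 3.2.1,
   applied to the cocircuits). *)
Definition is_OM_cocircuits (C : {set signvec m}) : Prop :=
  [/\ zero_sv \notin C,
      (forall X, X \in C -> opp_sv X \in C),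
      (forall X Y, X \in C -> Y \in C -> supp X \subset supp Y ->
                   X = Y \/ X = opp_sv Y)
    & (forall X Y e, X \in C -> Y \in C -> X <> opp_sv Y ->
         e \in posp X -> e \in negp Y ->
         exists2 Z, Z \in C &
           (posp Z \subset (posp X :|: posp Y) :\ e) /\
           (negp Z \subset (negp X :|: negp Y) :\ e))].

Definition uniform_of_rank (r : nat) (C : {set signvec m}) : Prop :=
  (forall X, X \in C -> #|supp X| = (m - r).+1)%N /\
  (forall S : {set 'I_m}, #|S| = (m - r).+1 -> exists2 X, X \in C & supp X = S)%N.

(* A nonzero sign vector X is the face conv{sign(X_i) e_i : X_i <> 0} of the
   boundary of the crosspolytope; its dimension is #|supp X| - 1.
   Z_2-valued cochains: functions on faces (a k-cochain is only evaluated on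
   faces X with #|supp X| = k+1). *)
Definition cochain := signvec m -> 'F_2.

Definition hat (tau : signvec m) : cochain := fun X => (X == tau)%:R.

Definition z2_invariant (c : cochain) : Prop := forall X, c (opp_sv X) = c X.

Definition delete X (i : 'I_m) : signvec m :=
  [ffun j => if j == i then None else X j].

Definition cobound (c : cochain) : cochain :=
  fun X => \sum_(i in supp X) c (delete X i).

Definition cocycle (k : nat) (c : cochain) : Prop :=
  forall X, #|supp X| = k.+2 -> cobound c X = 0.

Definition is_cochain (k : nat) (c : cochain) : Prop :=
  forall X, c X != 0 -> #|supp X| = k.+1.

(* c1 and c2 represent the same class in H^k of the complex of
   Z_2-invariant cochains (= H^k(RP^{m-1}; Z_2)): they differ on k-faces by
   the coboundary of an invariant (k-1)-cochain (b = 0 when k = 0). *)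
Definition cohomologous (k : nat) (c1 c2 : cochain) : Prop :=
  exists b : cochain,
    [/\ (forall X, b X != 0 -> (0 < k)%N /\ #|supp X| = k),
        z2_invariant b
      & forall X, #|supp X| = k.+1 -> c1 X = c2 X + cobound b X].

(* Alexander--Whitney cup product, vertices of each face ordered by their
   index in [m] (an order preserved by the antipodal map, so this is the
   cup product of the quotient Delta-complex RP^{m-1}). *)
Definition ssupp X : seq 'I_m := [seq i <- enum 'I_m | X i != None].
Definition restrict X (s : seq 'I_m) : signvec m :=
  [ffun i => if i \in s then X i else None].
Definition front (p : nat) X := restrict X (take p.+1 (ssupp X)).
Definition back (p : nat) X := restrict X (drop p (ssupp X)).
Definition cup (p : nat) (a b : cochain) : cochain :=
  fun X => a (front p X) * b (back p X).

(* The standard cocycle representing w_1 of the double cover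
   S^{m-1} -> RP^{m-1}: an edge [eps_i e_i, eps_j e_j] gets value 1 iff the
   two signs differ (lift of the edge leaves the fundamental domain
   {+e_1, ..., +e_m}). *)
Definition w1 : cochain :=
  fun X => ([exists i, X i == Some true] && [exists i, X i == Some false])%:R.

Fixpoint w1pow (k : nat) : cochain :=
  match k with
  | 0 => fun _ => 1
  | k'.+1 => cup k' (w1pow k') w1
  end.

Definition CM (C : {set signvec m}) : cochain :=
  fun X => \sum_(tau in C) hat tau X.

End SignVectors.

(* Main.v *)
Require Import Defs.
From HB Require Import structures.
From mathcomp Require Import all_boot all_algebra zify.
Set Implicit Arguments.
Unset Strict Implicit.
Unset Printing Implicit Defensive.
Import GRing.Theory.
Local Open Scope ring_scope.


Section Basic.
Variable m : nat.
Implicit Types (X Y Z : signvec m).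

Lemma F2_addrr (x : 'F_2) : x + x = 0.
Proof. by case: x => [[|[|]]] // ?; apply/eqP. Qed.

Lemma F2_opp (x : 'F_2) : - x = x.
Proof. by apply/eqP; rewrite eq_sym -subr_eq0 opprK F2_addrr. Qed.

Lemma in_supp X i : (i \in supp X) = (X i != None).
Proof. by rewrite inE. Qed.

Lemma card_supp X : #|supp X| = size (ssupp X).
Proof. rewrite cardE /ssupp enumT /enum_mem; congr size; apply: eq_filter=> i; by rewrite !inE. Qed.

Lemma uniq_ssupp X : uniq (ssupp X).
Proof. by rewrite filter_uniq ?enum_uniq. Qed.

Lemma mem_ssupp X i : (i \in ssupp X) = (X i != None).
Proof. by rewrite mem_filter mem_enum andbT. Qed.

Lemma oppK X : opp_sv (opp_sv X) = X.
Proof. by apply/ffunP=> i; rewrite !ffunE; case: (X i) => // -[]. Qed.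

Lemma opp_inj : injective (@opp_sv m).
Proof. exact: can_inj oppK. Qed.

Lemma supp_opp X : supp (opp_sv X) = supp X.
Proof. by apply/setP=> i; rewrite !inE ffunE; case: (X i). Qed.

Lemma ssupp_opp X : ssupp (opp_sv X) = ssupp X.
Proof. by apply: eq_filter=> i; rewrite ffunE; case: (X i). Qed.

Lemma delete_opp X i : delete (opp_sv X) i = opp_sv (delete X i).
Proof. by apply/ffunP=> j; rewrite !ffunE; case: (j == i). Qed.

Lemma supp_delete X i : supp (delete X i) = supp X :\ i.
Proof. by apply/setP=> j; rewrite !inE ffunE; case: (j == i). Qed.

Lemma deleteC X i j : delete (delete X i) j = delete (delete X j) i.
Proof. by apply/ffunP=> k; rewrite !ffunE; case: (k == i); case: (k == j). Qed.

Lemma delete_id X i : X i = None -> delete X i = X.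
Proof. by move=> h; apply/ffunP=> k; rewrite !ffunE; case: eqP => // ->. Qed.

Lemma delete_at X i : delete X i i = None.
Proof. by rewrite ffunE eqxx. Qed.

Lemma delete_ne X i j : j != i -> delete X i j = X j.
Proof. by rewrite ffunE => /negbTE ->. Qed.

Lemma cobound_opp (c : cochain m) X :
  z2_invariant c -> cobound c (opp_sv X) = cobound c X.
Proof.
move=> ic; rewrite /cobound supp_opp; apply: eq_bigr=> i _.
by rewrite delete_opp ic.
Qed.

Lemma cobound_inv (c : cochain m) : z2_invariant c -> z2_invariant (cobound c).
Proof. by move=> ic X; apply: cobound_opp. Qed.

Lemma coboundD (c d : cochain m) X :
  cobound (fun Y => c Y + d Y) X = cobound c X + cobound d X.
Proof. by rewrite /cobound big_split. Qed.

Lemma coboundB (c d : cochain m) X :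
  cobound (fun Y => c Y - d Y) X = cobound c X - cobound d X.
Proof. by rewrite /cobound sumrB. Qed.

Lemma coboundZ (a : 'F_2) (c : cochain m) X :
  cobound (fun Y => a * c Y) X = a * cobound c X.
Proof. by rewrite /cobound mulr_sumr. Qed.

Lemma sum_invol (T : finType) (A : pred T) (F : T -> 'F_2) (f : T -> T) :
  (forall x, A x -> A (f x)) -> (forall x, f (f x) = x) ->
  (forall x, A x -> f x != x) -> (forall x, A x -> F (f x) = F x) ->
  \sum_(x | A x) F x = 0.
Proof.
move=> Af ff fne Ff.
have finj : injective f by exact: can_inj ff.
pose rk (x : T) : nat := enum_rank x.
rewrite (bigID (fun x => rk x < rk (f x))%N) /=.
rewrite (reindex_inj finj) /=.
rewrite (eq_bigl (fun x => A x && ~~ (rk x < rk (f x))%N)); last first.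
  move=> x; rewrite ff; case Ax: (A x).
    rewrite Af // /= -leqNgt ltn_neqAle.
    have -> : (rk (f x) != rk x) = true.
      apply: contra (fne _ Ax) => /eqP h.
      by apply/eqP; apply: enum_rank_inj; apply: val_inj.
    by [].
  case Afx: (A (f x)) => //.
  by move: (Af _ Afx); rewrite ff Ax.
rewrite [X in X + _](eq_bigr (fun x => F x)); first by rewrite F2_addrr.
move=> x /andP[Ax _]; exact: Ff.
Qed.

Lemma dd0 (g : cochain m) X : cobound (cobound g) X = 0.
Proof.
rewrite /cobound.
rewrite (eq_bigr (fun i => \sum_(j | j \in supp (delete X i)) g (delete (delete X i) j))) //.
rewrite pair_big_dep /=.
apply: (sum_invol (f := fun p => (p.2, p.1))).
- move=> [i j] /=; rewrite supp_delete !inE => /and3P[hi hji hj].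
  by rewrite hj delete_ne // eq_sym.
- by case.
- move=> [i j] /=; rewrite supp_delete !inE => /and3P[hi hji hj].
  apply: contra hji => /eqP [->]; by [].
- by move=> [i j] _ /=; rewrite deleteC.
Qed.

End Basic.


Section Ext.
Variable m : nat.
Implicit Types (X Y Z : signvec m).

Definition P k : {set 'I_m} := [set i : 'I_m | (i < k)%N].
Definition ext Z (q : 'I_m) (b : bool) : signvec m :=
  [ffun j => if j == q then Some b else Z j].
Definition flip Z (i : 'I_m) : signvec m :=
  [ffun j => if j == i then omap negb (Z j) else Z j].

Lemma supp_ext Z q b : supp (ext Z q b) = q |: supp Z.
Proof. by apply/setP=> j; rewrite !inE ffunE; case: (j == q). Qed.

Lemma ext_q Z q b : ext Z q b q = Some b.
Proof. by rewrite ffunE eqxx. Qed.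

Lemma ext_ne Z q b j : j != q -> ext Z q b j = Z j.
Proof. by rewrite ffunE => /negbTE ->. Qed.

Lemma delete_ext_q Z q b : Z q = None -> delete (ext Z q b) q = Z.
Proof.
move=> h; apply/ffunP=> j; rewrite !ffunE; case: eqP => [->|] //.
Qed.

Lemma delete_ext_ne Z q b i : i != q -> delete (ext Z q b) i = ext (delete Z i) q b.
Proof.
move=> h; apply/ffunP=> j; rewrite !ffunE.
case: (eqVneq j i) => [->|_]; first by rewrite (negbTE h).
by [].
Qed.

Lemma ext_delete X q b : X q = Some b -> ext (delete X q) q b = X.
Proof. by move=> h; apply/ffunP=> j; rewrite !ffunE; case: eqP => [->|]. Qed.

Lemma opp_ext Z q b : opp_sv (ext Z q b) = ext (opp_sv Z) q (~~ b).
Proof. by apply/ffunP=> j; rewrite !ffunE; case: (j == q). Qed.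

Lemma cobound_ext (f : cochain m) Z q b : Z q = None ->
  cobound f (ext Z q b) = f Z + cobound (fun W => f (ext W q b)) Z.
Proof.
move=> hq; rewrite /cobound supp_ext big_setU1 /=; last by rewrite in_supp hq.
rewrite delete_ext_q //; congr (_ + _); apply: eq_bigr=> i hi.
rewrite delete_ext_ne //; apply: contraTneq hi => ->; by rewrite in_supp hq.
Qed.

Lemma cobound_cone (G H : cochain m) q b X :
  (forall Y, Y q = Some b -> G Y = H (delete Y q)) ->
  (forall Y, Y q = None -> G Y = 0) ->
  X q = Some b -> cobound G X = cobound H (delete X q).
Proof.
move=> hG hN hX; rewrite -{1}(ext_delete hX) cobound_ext ?delete_at //.
rewrite hN ?delete_at // add0r /cobound; apply: eq_bigr=> i hi.
rewrite hG ?ext_q // delete_ext_q //.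
have iq : i != q by apply: contraTneq hi => ->; rewrite in_supp delete_at.
by rewrite delete_ne 1?eq_sym // delete_at.
Qed.

Lemma cobound_none (G : cochain m) q X :
  (forall Y, Y q = None -> G Y = 0) -> X q = None -> cobound G X = 0.
Proof.
move=> hN hX; rewrite /cobound big1 // => i _; apply: hN.
rewrite ffunE; case: (q == i) => //.
Qed.

Lemma card_P k : (k <= m)%N -> #|P k| = k.
Proof.
move=> km.
have -> : P k = [set widen_ord km j | j : 'I_k].
  apply/setP=> i; rewrite !inE; apply/idP/imsetP.
    by move=> hi; exists (Ordinal hi) => //; apply: val_inj.
  by case=> j _ ->; rewrite /= ltn_ord.
by rewrite card_imset ?card_ord //; by move=> x y /(congr1 val) /= /val_inj.
Qed.

Lemma card_sub_P X k : (k <= m)%N -> supp X \subset P k -> (#|supp X| <= k)%N.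
Proof. by move=> km h; rewrite -(card_P km) subset_leq_card. Qed.

Lemma P_S k (q : 'I_m) : nat_of_ord q = k -> P k.+1 = q |: P k.
Proof.
move=> hq; apply/setP=> i; rewrite !inE ltnS leq_eqVlt.
by rewrite -hq -val_eqE.
Qed.

Lemma q_notin_P k (q : 'I_m) : nat_of_ord q = k -> q \notin P k.
Proof. by move=> hq; rewrite inE hq ltnn. Qed.

Lemma sub_P_none X k (q : 'I_m) : nat_of_ord q = k ->
  supp X \subset P k.+1 -> X q = None -> supp X \subset P k.
Proof.
move=> hq /subsetP h hX; apply/subsetP=> i hi.
have := h _ hi; rewrite (P_S hq) !inE => /orP[/eqP e|//].
by move: hi; rewrite e in_supp hX.
Qed.

Lemma sub_P_ext Z k (q : 'I_m) b : nat_of_ord q = k ->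
  supp Z \subset P k -> supp (ext Z q b) \subset P k.+1.
Proof. by move=> hq h; rewrite supp_ext (P_S hq) setUS. Qed.

Lemma none_of_sub_P Z k (q : 'I_m) : nat_of_ord q = k ->
  supp Z \subset P k -> Z q = None.
Proof.
move=> hq /subsetP h; apply/eqP; apply: contraT => hz.
by have := h q; rewrite in_supp hz => /(_ isT); rewrite inE hq ltnn.
Qed.

Lemma delete_sub X i k : supp X \subset P k -> supp (delete X i) \subset P k.
Proof. by move=> h; rewrite supp_delete (subset_trans _ h) ?subD1set. Qed.

Lemma sum_reindex_b (F : cochain m) k (q : 'I_m) b : nat_of_ord q = k ->
  \sum_(X | (supp X == P k.+1) && (X q == Some b)) F X =
  \sum_(Z | supp Z == P k) F (ext Z q b).
Proof.
move=> hq.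
rewrite (reindex_onto (fun Z => ext Z q b) (fun X => delete X q)); last first.
  by move=> X /andP[_ /eqP h]; apply: ext_delete.
apply: eq_bigl=> Z; rewrite ext_q eqxx andbT supp_ext.
apply/idP/idP.
  move=> /andP[/eqP h1 /eqP h2].
  have hZ : Z q = None by rewrite -h2 delete_at.
  have hs : q \notin supp Z by rewrite in_supp hZ.
  by rewrite -(setU1K hs) h1 (P_S hq) setU1K ?q_notin_P.
move=> /eqP h; rewrite delete_ext_q; last by apply: (none_of_sub_P hq); rewrite h.
by rewrite h (P_S hq) !eqxx.
Qed.

Lemma sum_split (F : cochain m) k (q : 'I_m) : nat_of_ord q = k ->
  \sum_(X | supp X == P k.+1) F X =
  \sum_(Z | supp Z == P k) F (ext Z q true) + \sum_(Z | supp Z == P k) F (ext Z q false).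
Proof.
move=> hq; rewrite -!sum_reindex_b // (bigID (fun X => X q == Some true)) /=.
congr (_ + _); apply: eq_bigl=> X.
case: (eqVneq (supp X) (P k.+1)) => //= h.
have : q \in supp X by rewrite h (P_S hq) setU11.
by rewrite in_supp; case: (X q) => // -[].
Qed.

Lemma supp_flip Z i : supp (flip Z i) = supp Z.
Proof. by apply/setP=> j; rewrite !inE ffunE; case: (j == i); case: (Z j). Qed.

Lemma flipK Z i : flip (flip Z i) i = Z.
Proof.
by apply/ffunP=> j; rewrite !ffunE; case: eqP => // _; case: (Z j) => // -[].
Qed.

Lemma flip_ne Z i : Z i != None -> flip Z i != Z.
Proof.
move=> h; apply/negP=> /eqP /ffunP /(_ i); rewrite ffunE eqxx.
by case: (Z i) h => // -[].
Qed.

Lemma delete_flip Z i : delete (flip Z i) i = delete Z i.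
Proof. by apply/ffunP=> j; rewrite !ffunE; case: eqP. Qed.

Lemma sum_pairing (F : cochain m) (S : {set 'I_m}) :
  \sum_(Z | supp Z == S) \sum_(i in supp Z) F (delete Z i) = 0.
Proof.
rewrite pair_big_dep /=.
apply: (sum_invol (f := fun p => (flip p.1 p.2, p.2))).
- by move=> [Z i] /=; rewrite supp_flip.
- by move=> [Z i] /=; rewrite flipK.
- move=> [Z i] /= /andP[_ hi]; apply: contra (flip_ne (i := i) (Z := Z) _).
    by move=> /eqP [->].
  by rewrite -in_supp.
- by move=> [Z i] _ /=; rewrite delete_flip.
Qed.

End Ext.


Section Sphere.
Variable m : nat.
Implicit Types (X Y Z : signvec m).

Lemma card_ext Z q b : Z q = None -> #|supp (ext Z q b)| = #|supp Z|.+1.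
Proof. by move=> h; rewrite supp_ext cardsU1 in_supp h. Qed.

Lemma card_delete_q X q : X q != None -> #|supp (delete X q)| = #|supp X|.-1.
Proof. by move=> h; rewrite supp_delete (cardsD1 q (supp X)) in_supp h. Qed.

Lemma supp0 Y : supp Y = P m 0 -> Y = zero_sv m.
Proof.
move=> h; apply/ffunP=> i; rewrite ffunE; apply/eqP; apply: contraT => hi.
by have := in_supp Y i; rewrite h inE ltn0 (negbTE hi).
Qed.

Lemma P0 : P m 0 = set0.
Proof. by apply/setP=> i; rewrite !inE. Qed.

Lemma sub_PS k : P m k \subset P m k.+1.
Proof. by apply/subsetP=> i; rewrite !inE => /ltnW. Qed.

Lemma sum_eq1 (A : pred (signvec m)) W0 :
  A W0 -> \sum_(Z | A Z) ((Z == W0)%:R : 'F_2) = 1.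
Proof.
move=> hA; rewrite (bigD1 W0) //= eqxx big1 ?addr0 //.
by move=> Z /andP[_ /negbTE ->].
Qed.

Lemma sphere k : (k <= m)%N -> forall s, (s <= k)%N -> forall f : cochain m,
  (forall X, supp X \subset P m k -> #|supp X| = s.+1 -> cobound f X = 0) ->
  (s = k -> \sum_(X | supp X == P m k) f X = 0) ->
  exists g : cochain m, forall X, supp X \subset P m k -> #|supp X| = s ->
    f X = cobound g X.
Proof.
elim: k => [|k IH] km s sk f hc hs.
  exists (fun _ => 0) => X hX _.
  have h0 : supp X == P m 0 by rewrite eqEsubset hX P0 sub0set.
  rewrite /cobound big1 // .
  move: sk; rewrite leqn0 => /eqP s0; have := hs s0.
  rewrite (bigD1 X) //= big1 ?addr0 //.
  move=> Y /andP[/eqP hY]; move/eqP: h0 => h0.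
  by rewrite (supp0 hY) (supp0 h0) eqxx.
have km' : (k < m)%N by [].
pose q := Ordinal km'.
have hq : nat_of_ord q = k by [].
have [g0 hg0] : exists g0 : cochain m, forall X, supp X \subset P m k ->
    #|supp X| = s -> f X = cobound g0 X.
  case: (leqP s k) => [sk'|ks].
    apply: (IH (ltnW km) s sk').
      by move=> X hX; apply: hc; apply: subset_trans hX (sub_PS k).
    move=> sk0.
    rewrite (eq_bigr (fun Z => cobound (fun W => f (ext W q true)) Z)).
      exact: sum_pairing.
    move=> Z /eqP hZ.
    have hZq : Z q = None by apply: (none_of_sub_P hq); rewrite hZ.
    have hZs : supp Z \subset P m k by rewrite hZ.
    have := hc (ext Z q true) (sub_P_ext true hq hZs).
    rewrite card_ext // hZ card_P ?(ltnW km) // sk0 => /(_ erefl).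
    rewrite cobound_ext // => /eqP; rewrite addr_eq0 => /eqP ->.
    by rewrite F2_opp.
  exists (fun _ => 0) => X hX hs'.
  by have := card_sub_P (ltnW km) hX; rewrite hs' leqNgt ks.
pose g0' : cochain m := fun X => if supp X \subset P m k then g0 X else 0.
pose f1 : cochain m := fun X => f X - cobound g0' X.
have hg0' : forall X, supp X \subset P m k -> cobound g0' X = cobound g0 X.
  move=> X hX; apply: eq_bigr => i _; by rewrite /g0' delete_sub.
have f1v : forall X, supp X \subset P m k -> #|supp X| = s -> f1 X = 0.
  by move=> X hX hXs; rewrite /f1 hg0' // -hg0 // subrr.
have f1c : forall X, supp X \subset P m k.+1 -> #|supp X| = s.+1 -> cobound f1 X = 0.
  by move=> X hX hXs; rewrite /f1 coboundB hc // dd0 subrr.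
have f1e : forall X, f X = f1 X + cobound g0' X.
  by move=> X; rewrite /f1 subrK.
case: s sk hc hs hg0 f1v f1c => [|s'] sk hc hs hg0 f1v f1c.
  exists g0' => X hX hX0; rewrite f1e f1v ?add0r //.
  by move/eqP: hX0; rewrite cards_eq0 => /eqP ->; rewrite sub0set.
pose W0 : signvec m := [ffun j : 'I_m => if (j < k)%N then Some true else None].
have hW0 : supp W0 = P m k by apply/setP=> j; rewrite !inE ffunE; case: (j < k)%N.
have W0q : W0 q = None by rewrite ffunE hq ltnn.
pose hh : 'F_2 := if s' == k then \sum_(Z | supp Z == P m k) f1 (ext Z q true) else 0.
pose fb (b : bool) : cochain m := fun Z => f1 (ext Z q b) - hh * (Z == W0)%:R.
have hb : forall b, exists gb : cochain m, forall X, supp X \subset P m k ->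
    #|supp X| = s' -> fb b X = cobound gb X.
  move=> b; apply: IH => //; first exact: ltnW.
  - move=> Z hZ hZs.
    have hZq : Z q = None by apply: (none_of_sub_P hq).
    case: (eqVneq s' k) => [e|ne].
      by have := card_sub_P (ltnW km) hZ; rewrite hZs e ltnn.
    rewrite /fb /= /hh (negbTE ne).
    rewrite /cobound (eq_bigr (fun i => f1 (ext (delete Z i) q b))); last first.
      by move=> i _; rewrite mul0r subr0.
    have := f1c (ext Z q b) (sub_P_ext b hq hZ); rewrite card_ext // hZs.
    by move=> /(_ erefl); rewrite cobound_ext // f1v // add0r /cobound.
  - move=> e; rewrite /fb sumrB -mulr_sumr sum_eq1 ?hW0 // mulr1.
    rewrite /hh e eqxx.
    case: b; first by rewrite subrr.
    have := hs; rewrite e => /(_ erefl).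
    rewrite (eq_bigr (fun X => f1 X + cobound g0' X)) // big_split /=.
    rewrite [X in _ + X](eq_bigr (fun X => \sum_(i in supp X) g0' (delete X i))) //.
    rewrite sum_pairing addr0 (sum_split _ hq) => /eqP; rewrite addr_eq0 => /eqP ->.
    by rewrite F2_opp subrr.
have [gt hgt] := hb true.
have [gf hgf] := hb false.
pose G : cochain m := fun X => match X q with
  | Some b => (if b then gt else gf) (delete X q) | None => 0 end.
exists (fun X => g0' X + G X + hh * (X == W0)%:R) => X hX hXs.
rewrite !coboundD coboundZ f1e -[RHS]addrA [RHS]addrC; congr (_ + _).
case hXq: (X q) => [b|].
  rewrite (@cobound_cone m G (if b then gt else gf) q b X) //; last 2 first.
  - by move=> Y hY; rewrite /G hY.
  - by move=> Y hY; rewrite /G hY.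
  have hd : supp (delete X q) \subset P m k.
    by apply: (sub_P_none hq); [exact: delete_sub | exact: delete_at].
  have hds : #|supp (delete X q)| = s' by rewrite card_delete_q ?hXq // hXs.
  have := (if b as b0 return (fb b0 (delete X q) = cobound (if b0 then gt else gf) (delete X q)) then hgt _ hd hds else hgf _ hd hds).
  rewrite /fb ext_delete // => <-.
  have -> : cobound (fun Y => (Y == W0)%:R) X = (delete X q == W0)%:R :> 'F_2.
    rewrite /cobound (bigD1 q) /=; last by rewrite in_supp hXq.
    rewrite big1 ?addr0 // => i /andP[_ iq].
    have : delete X i != W0.
      by apply/eqP => e; move: W0q; rewrite -e delete_ne ?hXq // eq_sym.
    by move/negbTE ->.
  by rewrite subrK.
have hX' : supp X \subset P m k by apply: (sub_P_none hq).
have ne : s' != k.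
  by apply/eqP=> e; have := card_sub_P (ltnW km) hX'; rewrite hXs e ltnn.
rewrite f1v // ?hXs // (@cobound_none m G q) //; last by move=> Y hY; rewrite /G hY.
by rewrite /hh (negbTE ne) mul0r addr0.
Qed.

End Sphere.


Section RP.
Variable m : nat.
Implicit Types (X Y Z : signvec m).

Lemma rp k : (k <= m)%N -> forall s, (0 < s)%N -> (s <= k)%N -> forall c : cochain m,
  z2_invariant c ->
  (forall X, supp X \subset P m k -> #|supp X| = s.+1 -> cobound c X = 0) ->
  \sum_(X | (supp X == P m s) && [forall i : 'I_m, (i.+1 == s) ==> (X i == Some true)]) c X = 0 ->
  exists b : cochain m, z2_invariant b /\
    forall X, supp X \subset P m k -> #|supp X| = s -> c X = cobound b X.
Proof.
elim: k => [|k IH] km s s0 sk c ic hc hs.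
  by move: s0; rewrite lt0n -leqn0 sk.
have km' : (k < m)%N by [].
pose q := Ordinal km'.
have hq : nat_of_ord q = k by [].
have [b0 [ib0 [hb0 hb00]]] : exists b0 : cochain m, z2_invariant b0 /\
    (forall X, supp X \subset P m k -> #|supp X| = s -> c X = cobound b0 X) /\
    (s = k.+1 -> forall X, b0 X = 0).
  case: (leqP s k) => [sk'|ks].
    have [b0 [ib0 hb0]] := IH (ltnW km) s s0 sk' c ic
      (fun X hX => hc X (subset_trans hX (sub_PS m k))) hs.
    exists b0; split => //; split => // e.
    by move: sk'; rewrite e ltnn.
  exists (fun _ => 0); split => //; split => // X hX hs'.
  by have := card_sub_P (ltnW km) hX; rewrite hs' leqNgt ks.
pose b0' : cochain m := fun X => if supp X \subset P m k then b0 X else 0.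
have ib0' : z2_invariant b0' by move=> X; rewrite /b0' supp_opp ib0.
pose c1 : cochain m := fun X => c X - cobound b0' X.
have ic1 : z2_invariant c1 by move=> X; rewrite /c1 ic cobound_opp.
have hb0' : forall X, supp X \subset P m k -> cobound b0' X = cobound b0 X.
  move=> X hX; apply: eq_bigr => i _; by rewrite /b0' delete_sub.
have c1v : forall X, supp X \subset P m k -> #|supp X| = s -> c1 X = 0.
  by move=> X hX hXs; rewrite /c1 hb0' // -hb0 // subrr.
have c1c : forall X, supp X \subset P m k.+1 -> #|supp X| = s.+1 -> cobound c1 X = 0.
  by move=> X hX hXs; rewrite /c1 coboundB hc // dd0 subrr.
have c1e : forall X, c X = c1 X + cobound b0' X.
  by move=> X; rewrite /c1 subrK.
case: s s0 sk hc hs hb0 hb00 c1v c1c => [//|s'] _ sk hc hs hb0 hb00 c1v c1c.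
have [h hh] : exists h : cochain m, forall Z, supp Z \subset P m k -> #|supp Z| = s' ->
    c1 (ext Z q true) = cobound h Z.
  apply: (sphere (ltnW km)) => //.
    move=> Z hZ hZs.
    have hZq : Z q = None by apply: (none_of_sub_P hq).
    have := c1c (ext Z q true) (sub_P_ext true hq hZ); rewrite card_ext // hZs.
    by move=> /(_ erefl); rewrite cobound_ext // c1v // add0r.
  move=> e.
  have b00 : forall X, b0' X = 0 by move=> X; rewrite /b0' hb00 ?e ?if_same.
  rewrite -(sum_reindex_b _ true hq).
  rewrite -[RHS]hs e; apply: eq_big => X.
    case: (supp X == P m k.+1) => //=.
    apply/eqP/forallP.
      move=> hX i; apply/implyP => /eqP [ei].
      have -> : i = q by apply: val_inj; rewrite /= ei.
      by apply/eqP.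
    by move=> /(_ q) /implyP; rewrite hq eqxx => /(_ isT) /eqP.
  by move=> _; rewrite /c1 /cobound big1 ?subr0.
pose G : cochain m := fun X => match X q with
  | Some true => h (delete X q) | Some false => h (delete (opp_sv X) q) | None => 0 end.
have iG : z2_invariant G.
  move=> X; rewrite /G ffunE; case: (X q) => [[]|] //=.
  by rewrite oppK.
have key : forall X, supp X \subset P m k.+1 -> #|supp X| = s'.+1 ->
    X q = Some true -> c1 X = cobound G X.
  move=> X hX hXs hXq.
  rewrite (@cobound_cone m G h q true X) //; last 2 first.
  - by move=> Y hY; rewrite /G hY.
  - by move=> Y hY; rewrite /G hY.
  have hd : supp (delete X q) \subset P m k.
    by apply: (sub_P_none hq); [exact: delete_sub | exact: delete_at].
  have hds : #|supp (delete X q)| = s' by rewrite card_delete_q ?hXq // hXs.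
  by rewrite -hh // ext_delete.
exists (fun X => b0' X + G X); split.
  by move=> X; rewrite ib0' iG.
move=> X hX hXs; rewrite coboundD c1e addrC; congr (_ + _).
case hXq: (X q) => [[]|].
- exact: key.
- rewrite -ic1 -(cobound_opp _ iG); apply: key.
  + by rewrite supp_opp.
  + by rewrite supp_opp.
  + by rewrite ffunE hXq.
- have hX' : supp X \subset P m k by apply: (sub_P_none hq).
  rewrite c1v // (@cobound_none m G q) //.
  by move=> Y hY; rewrite /G hY.
Qed.

End RP.


Section OM.
Variables (m r : nat) (C : {set signvec m}).
Hypothesis hOM : is_OM_cocircuits C.
Hypothesis hU : uniform_of_rank r C.
Implicit Types (X Y Z N W : signvec m).

Lemma CM_in X : CM C X = (X \in C)%:R.
Proof.
rewrite /CM /hat; case: (boolP (X \in C)) => hX.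
  rewrite (bigD1 X) //= eqxx big1 ?addr0 // => Y /andP[_ hY].
  by rewrite eq_sym (negbTE hY).
rewrite big1 // => Y hY; case: eqP => // e; by move: hX; rewrite e hY.
Qed.

Lemma opp_in X : X \in C -> opp_sv X \in C.
Proof. by case: hOM => _ h _ _; apply: h. Qed.

Lemma same_supp X Y : X \in C -> Y \in C -> supp X \subset supp Y ->
  X = Y \/ X = opp_sv Y.
Proof. by case: hOM => _ _ h _; apply: h. Qed.

Lemma card_coc X : X \in C -> #|supp X| = (m - r).+1.
Proof. by case: hU => h _; apply: h. Qed.

Lemma ex_coc (S : {set 'I_m}) : #|S| = (m - r).+1 -> exists2 X, X \in C & supp X = S.
Proof. by case: hU => _ h; apply: h. Qed.

Lemma bin (a b : option bool) : a != None -> b != None -> a != b -> omap negb a = b.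
Proof. by case: a => [[]|] //; case: b => [[]|]. Qed.

Lemma elim' P Q e (b : bool) : P \in C -> Q \in C -> P <> opp_sv Q ->
  P e = Some b -> Q e = Some (~~ b) ->
  exists2 Z, Z \in C & Z e = None /\
    forall f c, Z f = Some c -> P f = Some c \/ Q f = Some c.
Proof.
case: hOM => _ _ _ hel.
have gen : forall P Q, P \in C -> Q \in C -> P <> opp_sv Q ->
    P e = Some true -> Q e = Some false ->
    exists2 Z, Z \in C & Z e = None /\
      forall f c, Z f = Some c -> P f = Some c \/ Q f = Some c.
  move=> P0 Q0 hP hQ hne hPe hQe.
  have hp : e \in posp P0 by rewrite inE hPe.
  have hn : e \in negp Q0 by rewrite inE hQe.
  have [Z hZ [hpos hneg]] := hel P0 Q0 e hP hQ hne hp hn.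
  exists Z => //; split.
    case hZe: (Z e) => [[]|] //.
      by move/subsetP: hpos => /(_ e); rewrite !inE hZe eqxx => /(_ isT) /andP[].
    by move/subsetP: hneg => /(_ e); rewrite !inE hZe eqxx => /(_ isT) /andP[].
  move=> f [] hf.
    move/subsetP: hpos => /(_ f); rewrite !inE hf eqxx => /(_ isT) /andP[_].
    by case/orP => /eqP ->; [left|right].
  move/subsetP: hneg => /(_ f); rewrite !inE hf eqxx => /(_ isT) /andP[_].
  by case/orP => /eqP ->; [left|right].
move=> hP hQ hne; case: b => /= hPe hQe; first exact: gen.
have [Z hZ [hZe hZf]] := gen Q P hQ hP (fun e' => hne (etrans (esym (oppK P)) (congr1 (@opp_sv m) (esym e')))) hQe hPe.
exists Z => //; split => // f c /hZf []; by [right|left].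
Qed.


Lemma card_D1 (S : {set 'I_m}) t : t \in S -> #|S :\ t| = #|S|.-1.
Proof. by move=> h; rewrite (cardsD1 t S) h. Qed.

Lemma L2 X i j k : #|supp X| = (m - r).+2 ->
  i \in supp X -> j \in supp X -> k \in supp X -> i != j -> j != k -> i != k ->
  delete X i \in C -> delete X j \in C -> delete X k \in C -> False.
Proof.
move=> hX hi hj hk ij jk ik ci cj ck.
have [bk hbk] : exists bk, X k = Some bk by move: hk; rewrite in_supp; case: (X k) => // b; exists b.
have h1 : delete X i k = Some bk by rewrite delete_ne 1?eq_sym // hbk.
have h2 : opp_sv (delete X j) k = Some (~~ bk) by rewrite ffunE delete_ne 1?eq_sym // hbk.
have hne : delete X i <> opp_sv (opp_sv (delete X j)).
  have ji : j != i by rewrite eq_sym.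
  rewrite oppK => /ffunP /(_ j); rewrite !ffunE eqxx (negbTE ji).
  by move: hj; rewrite in_supp => /eqP.
have [Z hZ [hZk hZf]] := elim' ci (opp_in cj) hne h1 h2.
have hsub : supp Z \subset supp X :\ k.
  apply/subsetP => f; rewrite in_supp !inE.
  case hf: (Z f) => [c|] // _.
  have fk : f != k by apply/eqP => e; move: hf; rewrite e hZk.
  rewrite fk /=; case: (hZf f c hf); rewrite ?ffunE; case: (f == _) => //; case: (X f) => //.
have hs : supp Z = supp (delete X k).
  by apply/eqP; rewrite supp_delete eqEcard hsub card_coc // card_D1 // hX /= leqnn.
have hsZ : supp Z \subset supp (delete X k) by rewrite hs.
have [e|e] := same_supp hZ ck hsZ.
- have : Z i != None by rewrite -in_supp hs supp_delete in_setD1 ik hi.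
  case hZi: (Z i) => [c|] // _.
  case: (hZf i c hZi); first by rewrite delete_at.
  rewrite ffunE delete_ne // => hXi.
  move: hZi; rewrite e delete_ne //.
  by case: (X i) hXi => // b [] <- [] /eqP; case: b.
- have : Z j != None by rewrite -in_supp hs supp_delete in_setD1 jk hj.
  case hZj: (Z j) => [c|] // _.
  case: (hZf j c hZj); last by rewrite ffunE delete_at.
  rewrite delete_ne 1?eq_sym // => hXj.
  move: hZj; rewrite e ffunE delete_ne // hXj => -[] /eqP; by case: c {hXj}.
Qed.


Lemma notin_supp N j : (j \notin supp N) = (N j == None).
Proof. by rewrite in_supp negbK. Qed.

Definition Dset X N : {set 'I_m} := [set f | (N f != None) && (N f != X f)].

Lemma L1 X i : #|supp X| = (m - r).+2 -> i \in supp X -> delete X i \in C ->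
  exists j, [/\ j \in supp X, j != i & delete X j \in C].
Proof.
move=> hX hi ci.
have main : forall d j N, j \in supp X -> j != i -> N \in C ->
    supp N = supp X :\ j -> N i = X i -> (#|Dset X N| <= d)%N ->
    exists j, [/\ j \in supp X, j != i & delete X j \in C].
  elim=> [|d IH] j N hj ji hN hsN hNi hd.
    exists j; split => //.
    have -> : delete X j = N.
      apply/ffunP => f; rewrite ffunE.
      case: (eqVneq f j) => [->|fj].
        by apply/esym/eqP; rewrite -notin_supp hsN !inE eqxx.
      case: (eqVneq (N f) None) => hNf.
        rewrite hNf; have : f \notin supp N by rewrite notin_supp hNf.
        by rewrite hsN in_setD1 fj /= notin_supp => /eqP.
      have : f \notin Dset X N.
        by move: hd; rewrite leqn0 cards_eq0 => /eqP ->; rewrite inE.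
      by rewrite inE hNf /= negbK => /eqP.
    by [].
  case: (leqP #|Dset X N| d) => hdd; first exact: (IH j N).
  have : (0 < #|Dset X N|)%N by apply: leq_ltn_trans hdd.
  case/card_gt0P => t; rewrite inE => /andP[hNt hNXt].
  have tj : t != j by apply: contra hNt => /eqP ->; rewrite -notin_supp hsN !inE eqxx.
  have ht : t \in supp X by move: hNt; rewrite -in_supp hsN in_setD1 => /andP[].
  have ti : t != i by apply: contra hNXt => /eqP ->; rewrite hNi.
  have [bt hbt] : exists bt, X t = Some bt.
    by move: ht; rewrite in_supp; case: (X t) => // b; exists b.
  have h1 : delete X i t = Some bt by rewrite delete_ne.
  have h2 : N t = Some (~~ bt).
    by move: hNt hNXt; rewrite hbt; case: (N t) => // c _; case: c; case: bt {hbt h1}.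
  have hne : delete X i <> opp_sv N.
    move=> /ffunP /(_ j); rewrite !ffunE (negbTE ji).
    have : N j == None by rewrite -notin_supp hsN !inE eqxx.
    by move/eqP ->; move: hj; rewrite in_supp; case: (X j).
  have [Z hZ [hZt hZf]] := elim' ci hN hne h1 h2.
  have hsub : supp Z \subset supp X :\ t.
    apply/subsetP => f; rewrite in_supp in_setD1.
    case hf: (Z f) => [c|] // _.
    have ft : f != t by apply/eqP => e; move: hf; rewrite e hZt.
    rewrite ft /=; case: (hZf f c hf) => hh.
      by move: hh; rewrite in_supp ffunE; case: (f == i) => // ->.
    have : f \in supp N by rewrite in_supp hh.
    by rewrite hsN in_setD1 => /andP[].
  have hsZ : supp Z = supp X :\ t.
    by apply/eqP; rewrite eqEcard hsub card_coc // card_D1 // hX /= leqnn.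
  have hZi : Z i = X i.
    have : i \in supp Z by rewrite hsZ in_setD1 eq_sym ti hi.
    rewrite in_supp; case hz: (Z i) => [c|] // _.
    case: (hZf i c hz); first by rewrite delete_at.
    by rewrite hNi.
  apply: (IH t Z ht ti hZ hsZ hZi).
  rewrite -ltnS; apply: leq_trans hd; apply: proper_card.
  apply/properP; split.
    apply/subsetP => f; rewrite !inE; case hf: (Z f) => [c|] //= hZX.
    case: (hZf f c hf) => hh.
      have fi : f != i by apply/eqP => e; move: hh; rewrite e delete_at.
      by move: hh hZX; rewrite delete_ne // => ->; rewrite eqxx.
    by rewrite hh.
  by exists t; rewrite !inE ?hZt ?hNt ?hNXt.
have : (0 < #|supp X :\ i|)%N by rewrite card_D1 // hX.
case/card_gt0P => j; rewrite in_setD1 => /andP[ji hj].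
have [W hW hsW] := ex_coc (S := supp X :\ j) (etrans (card_D1 hj) (congr1 predn hX)).
have hWi : W i != None by rewrite -in_supp hsW in_setD1 eq_sym ji hi.
case: (eqVneq (W i) (X i)) => e.
  exact: (main #|Dset X W| j W).
apply: (main #|Dset X (opp_sv W)| j (opp_sv W) hj ji (opp_in hW)) => //.
  by rewrite supp_opp.
rewrite ffunE; apply: bin => //; by rewrite -in_supp.
Qed.


Lemma sum_bool_card (S : {set 'I_m}) (b : pred 'I_m) :
  \sum_(i in S) ((b i)%:R : 'F_2) = (#|[set i in S | b i]|)%:R.
Proof.
rewrite -sum1_card natr_sum (big_mkcond (fun i => i \in [set i in S | b i])).
rewrite [LHS](big_mkcond) /=; apply: eq_bigr => i _.
by rewrite !inE; case: (i \in S); case: (b i).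
Qed.

Lemma CM_cocycle : cocycle (m - r) (CM C).
Proof.
move=> X hX; rewrite /cobound (eq_bigr (fun i => ((delete X i \in C) : bool)%:R)); last first.
  by move=> i _; rewrite CM_in.
rewrite sum_bool_card.
case: (set_0Vmem [set i in supp X | delete X i \in C]) => [->|[i]].
  by rewrite cards0.
rewrite inE => /andP[hi ci].
have [j [hj ji cj]] := L1 hX hi ci.
have -> : [set i0 in supp X | delete X i0 \in C] = [set i; j].
  apply/setP => k; rewrite !inE.
  case: (eqVneq k i) => [->|ki]; first by rewrite -in_supp hi ci.
  case: (eqVneq k j) => [->|kj]; first by rewrite -in_supp hj cj.
  apply/negbTE/negP => /andP[hk ck].
  have ij : i != j by rewrite eq_sym.
  have ik : i != k by rewrite eq_sym.
  have jk : j != k by rewrite eq_sym.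
  rewrite -in_supp in hk.
  exact: (L2 hX hi hj hk ij jk ik ci cj ck).
rewrite cards2 eq_sym ji.
by apply/eqP.
Qed.

End OM.


Fixpoint altb (l : seq bool) : bool :=
  match l with
  | x :: ((y :: _) as l') => (x != y) && altb l'
  | _ => true
  end.

Lemma altb_cons2 x y t : altb [:: x, y & t] = (x != y) && altb (y :: t).
Proof. by []. Qed.

Lemma altb_take (l : seq bool) k : size l = k.+2 ->
  altb l = altb (take k.+1 l) && (nth false l k != nth false l k.+1).
Proof.
elim: k l => [|k IH] [|x [|y t]] // hs.
  by case: t hs => //= _; rewrite andbT.
rewrite altb_cons2 (IH (y :: t)); last by move: hs => /= [] ->.
have -> : take k.+2 [:: x, y & t] = [:: x, y & take k t] by [].
by rewrite altb_cons2 andbA.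
Qed.

Lemma filter_take (T : eqType) (s : seq T) p : uniq s ->
  [seq x <- s | x \in take p s] = take p s.
Proof.
move=> us; rewrite -[X in filter _ X](cat_take_drop p s) filter_cat.
have -> : [seq x <- take p s | x \in take p s] = take p s.
  by apply/all_filterP/allP => x.
rewrite (@eq_in_filter _ _ pred0) ?filter_pred0 ?cats0 //.
move=> x hx /=; apply/negbTE/negP => ht.
move: us; rewrite -(cat_take_drop p s) cat_uniq => /and3P[_ /hasP hh _].
by apply: hh; exists x.
Qed.

Lemma filter_drop (T : eqType) (s : seq T) p : uniq s ->
  [seq x <- s | x \in drop p s] = drop p s.
Proof.
move=> us; rewrite -[X in filter _ X](cat_take_drop p s) filter_cat.
have -> : [seq x <- drop p s | x \in drop p s] = drop p s.
  by apply/all_filterP/allP => x.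
rewrite (@eq_in_filter _ _ pred0) ?filter_pred0 //.
move=> x hx /=; apply/negbTE/negP => ht.
move: us; rewrite -(cat_take_drop p s) cat_uniq => /and3P[_ /hasP hh _].
by apply: hh; exists x.
Qed.

Section W1.
Variable m : nat.
Implicit Types (X Y Z : signvec m).

Definition vals X : seq bool := [seq X i == Some true | i <- ssupp X].

Lemma size_vals X : size (vals X) = size (ssupp X).
Proof. by rewrite size_map. Qed.

Lemma ssupp_restrict X (t : seq 'I_m) :
  ssupp (restrict X t) = [seq i <- ssupp X | i \in t].
Proof.
rewrite /ssupp -[RHS]filter_predI; apply: eq_filter => i /=.
by rewrite ffunE; case: (i \in t).
Qed.

Lemma vals_restrict X (t : seq 'I_m) :
  vals (restrict X t) = [seq X i == Some true | i <- [seq i <- ssupp X | i \in t]].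
Proof.
rewrite /vals ssupp_restrict; apply/eq_in_map => i.
by rewrite mem_filter ffunE => /andP[-> _].
Qed.

Lemma vals_front p X : vals (front p X) = take p.+1 (vals X).
Proof. by rewrite /front vals_restrict filter_take ?uniq_ssupp // map_take. Qed.

Lemma vals_back p X : vals (back p X) = drop p (vals X).
Proof. by rewrite /back vals_restrict filter_drop ?uniq_ssupp // map_drop. Qed.

Lemma ssupp_front p X : size (ssupp (front p X)) = size (take p.+1 (ssupp X)).
Proof. by rewrite /front ssupp_restrict filter_take ?uniq_ssupp. Qed.

Lemma exists_vals X c : [exists i, X i == Some c] = (c \in vals X).
Proof.
apply/existsP/mapP.
  move=> [i /eqP hi]; exists i; first by rewrite mem_ssupp hi.
  by rewrite hi; case: c {hi}.
move=> [i]; rewrite mem_ssupp => hi ->; exists i.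
by case: (X i) hi => // -[].
Qed.

Lemma w1_edge Y : size (vals Y) = 2 ->
  w1 Y = (nth false (vals Y) 0 != nth false (vals Y) 1)%:R.
Proof.
rewrite /w1 !exists_vals; case: (vals Y) => [|a [|b [|]]] //= _.
by rewrite !inE; case: a; case: b.
Qed.

Lemma w1pow_alt k X : size (ssupp X) = k.+1 -> w1pow k X = (altb (vals X))%:R.
Proof.
elim: k X => [|k IH] X hX /=.
  by rewrite /vals; case: (ssupp X) hX => [|i [|]].
rewrite /cup IH; last by rewrite ssupp_front size_take hX ltnSn.
rewrite w1_edge; last by rewrite vals_back size_drop size_vals hX -addn2 addKn.
rewrite vals_front vals_back !nth_drop addn0 addn1.
by rewrite [in RHS](@altb_take _ k) ?size_vals // -mulnb natrM.
Qed.

Lemma ssupp_front_opp p X : front p (opp_sv X) = opp_sv (front p X).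
Proof.
apply/ffunP=> i; rewrite !ffunE ssupp_opp.
by case: (i \in _).
Qed.

Lemma back_opp p X : back p (opp_sv X) = opp_sv (back p X).
Proof.
apply/ffunP=> i; rewrite !ffunE ssupp_opp.
by case: (i \in _).
Qed.

Lemma w1_opp X : w1 (opp_sv X) = w1 X.
Proof.
rewrite /w1.
have h : forall c, [exists i, opp_sv X i == Some c] = [exists i, X i == Some (~~ c)].
  move=> c; apply: eq_existsb => i; rewrite ffunE.
  by case: (X i) => [[]|]; case: c.
by rewrite !h andbC.
Qed.

Lemma w1pow_inv k : z2_invariant (@w1pow m k).
Proof.
elim: k => [|k IH] X //=.
by rewrite /cup ssupp_front_opp back_opp IH w1_opp.
Qed.

End W1.


Arguments altb : simpl never.
Definition rem_nth (T : Type) (l : seq T) j := take j l ++ drop j.+1 l.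

Lemma rem_nth0 (T : Type) (x : T) l : rem_nth (x :: l) 0 = l.
Proof. by rewrite /rem_nth /= drop0. Qed.

Lemma rem_nth0' (T : Type) (x : T) l n : rem_nth (x :: l) (@nat_of_ord n.+1 ord0) = l.
Proof. exact: rem_nth0. Qed.

Lemma rem_nthS (T : Type) (x : T) l j : rem_nth (x :: l) j.+1 = x :: rem_nth l j.
Proof. by []. Qed.

Lemma parity (l : seq bool) : (2 <= size l)%N ->
  \sum_(j < size l) ((altb (rem_nth l j))%:R : 'F_2) = 0.
Proof.
elim: l => [|x l IH] //; case: l IH => [|y [|z t]] // IH _.
  rewrite /= !big_ord_recl big_ord0 /=.
  by apply/eqP.
have IH' := IH isT.
rewrite /= big_ord_recl /=.
rewrite (eq_bigr (fun i : 'I_(size t).+2 => ((altb (x :: rem_nth [:: y, z & t] i))%:R : 'F_2))); last by [].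
rewrite big_ord_recl /=.
rewrite (eq_bigr (fun i : 'I_(size t).+1 => (((x != y) : nat)%:R * (altb (y :: rem_nth [:: z & t] i))%:R : 'F_2))); last first.
  by move=> i _; rewrite /bump /= -natrM mulnb.
rewrite -mulr_sumr.
move: IH'; rewrite /= big_ord_recl /=.
rewrite (eq_bigr (fun i : 'I_(size t).+1 => ((altb (y :: rem_nth [:: z & t] i))%:R : 'F_2))); last by [].
rewrite /rem_nth /= => /eqP; rewrite addrC addr_eq0 => /eqP ->.
rewrite F2_opp !altb_cons2.
clear IH; case: (altb (z :: t)); case: x; case: y; case: z; by apply/eqP.
Qed.

Section W1c.
Variable m : nat.
Implicit Types (X Y Z : signvec m).

Lemma ssupp_delete X i : ssupp (delete X i) = rem i (ssupp X).
Proof.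
rewrite rem_filter ?uniq_ssupp // /ssupp -[RHS]filter_predI.
by apply: eq_filter => j /=; rewrite ffunE; case: (j == i).
Qed.

Lemma vals_delete X i : vals (delete X i) = rem_nth (vals X) (index i (ssupp X)).
Proof.
rewrite /vals ssupp_delete.
have -> : [seq delete X i j == Some true | j <- rem i (ssupp X)] =
    [seq X j == Some true | j <- rem i (ssupp X)].
  apply/eq_in_map => j; rewrite mem_rem_uniq ?uniq_ssupp // inE => /andP[ji _].
  by rewrite delete_ne.
by rewrite remE /rem_nth map_cat map_take map_drop.
Qed.

Lemma sum_supp (F : 'I_m -> 'F_2) X :
  \sum_(i in supp X) F i = \sum_(i <- ssupp X) F i.
Proof.
rewrite /ssupp big_filter /= big_enum_cond /=; apply: eq_bigl => i; by rewrite in_supp.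
Qed.


Lemma w1pow_cocycle n : cocycle n (@w1pow m n).
Proof.
move=> X hX; rewrite /cobound sum_supp.
rewrite (eq_big_seq (fun i => ((altb (rem_nth (vals X) (index i (ssupp X))))%:R : 'F_2))); last first.
  move=> i hi; rewrite w1pow_alt ?vals_delete // -card_supp supp_delete card_D1 ?hX //.
  by rewrite in_supp -mem_ssupp.
have [x0 _] : exists x0 : 'I_m, true.
  have : (0 < #|supp X|)%N by rewrite hX.
  by case/card_gt0P => x _; exists x.
rewrite (big_nth x0) big_mkord.
rewrite (eq_bigr (fun j : 'I_(size (ssupp X)) => ((altb (rem_nth (vals X) j))%:R : 'F_2))); last first.
  by move=> j _; rewrite index_uniq ?uniq_ssupp.
rewrite -size_vals; apply: parity.
by rewrite size_vals -card_supp hX.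
Qed.

End W1c.


Lemma alt_uniq (l1 l2 : seq bool) : size l1 = size l2 -> altb l1 -> altb l2 ->
  last true l1 = last true l2 -> l1 = l2.
Proof.
elim: l1 l2 => [|x l1 IH] [|y l2] //= [hs].
case: l1 l2 hs IH => [|x' l1] [|y' l2] //= hs IH.
  by move=> _ _ ->.
rewrite !altb_cons2 => /andP[hx a1] /andP[hy a2] hl.
have e := IH (y' :: l2) hs a1 a2 hl.
case: e => e1 e2; rewrite e1 e2; congr (_ :: _).
have bb : forall a b c : bool, a != c -> b != c -> a = b by case; case; case.
rewrite e1 in hx; exact: (bb _ _ y' hx hy).
Qed.

Lemma altb_map_iota (g : nat -> bool) a k : (forall j, g j != g j.+1) ->
  altb (map g (iota a k)).
Proof.
move=> hg; elim: k a => [|k IH] a //; case: k IH => [|k] IH //.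
have -> : map g (iota a k.+2) = [:: g a, g a.+1 & map g (iota a.+2 k)] by [].
rewrite altb_cons2 hg /=.
exact: (IH a.+1).
Qed.

Section Half.
Variable m : nat.
Implicit Types (X Y Z : signvec m).

Definition Qs s X := (supp X == P m s) && [forall i : 'I_m, (i.+1 == s) ==> (X i == Some true)].

Lemma sum_unique (Q b : pred (signvec m)) X0 : Q X0 -> b X0 ->
  (forall X, Q X -> b X -> X = X0) -> \sum_(X | Q X) ((b X)%:R : 'F_2) = 1.
Proof.
move=> hQ hb hu; rewrite (bigD1 X0) //= hb big1 ?addr0 //.
move=> X /andP[hX hne]; case hbX: (b X) => //.
by move: hne; rewrite (hu X hX hbX) eqxx.
Qed.

Lemma mapval X s : (s <= m)%N -> supp X = P m s -> map val (ssupp X) = iota 0 s.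
Proof.
move=> sm hX.
have -> : ssupp X = [seq i : 'I_m <- enum 'I_m | (nat_of_ord i < s)%N].
  apply: eq_filter => i; by rewrite -in_supp hX inE.
have := filter_map (@nat_of_ord m) (fun j => (j < s)%N) (enum 'I_m). rewrite val_enum_ord (filter_iota_ltn 0 sm) => <- //.
Qed.

Lemma supp_eq_ssupp X Y : supp X = supp Y -> ssupp X = ssupp Y.
Proof. by move=> h; apply: eq_filter => i; rewrite -!in_supp h. Qed.

Lemma vals_inj X Y : supp X = supp Y -> vals X = vals Y -> X = Y.
Proof.
move=> hs hv; apply/ffunP => i.
case: (boolP (i \in supp X)) => hi.
  have hiY : i \in supp Y by rewrite -hs.
  move: hv; rewrite /vals (supp_eq_ssupp hs) => /eq_in_map /(_ i).
  rewrite mem_ssupp -in_supp hiY => /(_ isT).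
  move: hi hiY; rewrite !in_supp.
  by case: (X i) => [[]|] //; case: (Y i) => [[]|].
have hiY : i \notin supp Y by rewrite -hs.
by move: hi hiY; rewrite !notin_supp => /eqP -> /eqP ->.
Qed.

Lemma last_vals X s : (0 < s)%N -> (s <= m)%N -> Qs s X -> last true (vals X) = true.
Proof.
move=> s0 sm /andP[/eqP hX /forallP hq].
have hm := mapval sm hX.
have m0 : (0 < m)%N by apply: leq_trans sm.
pose x0 : 'I_m := Ordinal m0.
have hsz : size (ssupp X) = s by rewrite -(size_map val) hm size_iota.
rewrite -nth_last /vals size_map hsz (nth_map x0); last by rewrite hsz prednK.
set q := nth x0 (ssupp X) s.-1.
have hqv : nat_of_ord q = s.-1.
  by rewrite /q -(nth_map x0 0) ?hm ?nth_iota ?hsz ?prednK.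
have := hq q; rewrite hqv prednK // eqxx => /eqP ->.
by [].
Qed.


Lemma size_vals_P X s : (s <= m)%N -> supp X = P m s -> size (vals X) = s.
Proof. by move=> sm hX; rewrite size_vals -card_supp hX card_P. Qed.

Lemma half_w1 n : (n.+1 <= m)%N -> \sum_(X | Qs n.+1 X) @w1pow m n X = 1.
Proof.
move=> sm.
rewrite (eq_bigr (fun X => ((altb (vals X))%:R : 'F_2))); last first.
  by move=> X /andP[/eqP hX _]; apply: w1pow_alt; rewrite -card_supp hX card_P.
pose X0 : signvec m := [ffun i : 'I_m => if (i < n.+1)%N then Some (odd (n.+1 + i)) else None].
have hX0 : supp X0 = P m n.+1.
  by apply/setP => i; rewrite !inE ffunE; case: (i < n.+1)%N.
have QX0 : Qs n.+1 X0.
  rewrite /Qs hX0 eqxx /=; apply/forallP => i; apply/implyP => /eqP [hi].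
  by rewrite ffunE hi ltnSn addSn /= addnn odd_double.
have aX0 : altb (vals X0).
  have -> : vals X0 = map (fun j => odd (n.+1 + j)) (iota 0 n.+1).
    rewrite /vals -(mapval sm hX0) -map_comp; apply/eq_in_map => i.
    rewrite mem_ssupp /= ffunE; case: (i < n.+1)%N => //.
  by apply: altb_map_iota => j; rewrite addnS /=; case: odd.
apply: (sum_unique QX0 aX0).
move=> X QX aX.
have hX : supp X = P m n.+1 by case/andP: QX => /eqP.
apply: vals_inj; first by rewrite hX hX0.
apply: alt_uniq => //.
- by rewrite !(size_vals_P sm) ?hX ?hX0.
- by rewrite !(last_vals _ sm).
Qed.

End Half.


Section Final.
Variables (m r : nat) (C : {set signvec m}).
Hypothesis hOM : is_OM_cocircuits C.
Hypothesis hU : uniform_of_rank r C.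
Implicit Types (X Y Z : signvec m).

Lemma half_CM : (0 < r)%N -> (r <= m)%N -> \sum_(X | Qs (m - r).+1 X) CM C X = 1.
Proof.
move=> r0 rm.
have sm : ((m - r).+1 <= m)%N by lia.
rewrite (eq_bigr (fun X => ((X \in C) : bool)%:R)); last by move=> X _; rewrite CM_in.
have [Y hY hsY] := ex_coc hU (card_P sm).
have qm : ((m - r) < m)%N by lia.
pose q := Ordinal qm.
have hYq : Y q != None by rewrite -in_supp hsY inE /= ltnSn.
pose X0 := if Y q == Some true then Y else opp_sv Y.
have X0C : X0 \in C by rewrite /X0; case: ifP => // _; apply: opp_in.
have hX0 : supp X0 = P m (m - r).+1 by rewrite /X0; case: ifP; rewrite ?supp_opp.
have X0q : X0 q = Some true.
  rewrite /X0; case: ifP => [/eqP //|]; rewrite ffunE.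
  by case: (Y q) hYq => [[]|].
have QX0 : Qs (m - r).+1 X0.
  rewrite /Qs hX0 eqxx /=; apply/forallP => i; apply/implyP => /eqP [hi].
  have -> : i = q by apply: val_inj; rewrite /= hi.
  by rewrite X0q.
apply: (sum_unique QX0 X0C) => X /andP[/eqP hX /forallP hq] XC.
have Xq : X q = Some true by have := hq q; rewrite /= eqxx => /eqP.
have := same_supp hOM XC X0C; rewrite hX hX0 subxx => /(_ isT) [//|e].
by move: Xq; rewrite e ffunE X0q.
Qed.


Lemma sing_eq X Y : supp X = supp Y -> #|supp X| = 1%N -> X = Y \/ X = opp_sv Y.
Proof.
move=> hs h1; have [i hi] := cards1P (introT eqP h1).
have hj : forall j, j != i -> X j = None /\ Y j = None.
  move=> j ji; split; apply/eqP; rewrite -notin_supp ?hi -?hs ?hi inE //.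
have hXi : X i != None by rewrite -in_supp hi set11.
have hYi : Y i != None by rewrite -in_supp -hs hi set11.
case: (eqVneq (X i) (Y i)) => e; [left|right]; apply/ffunP => j; rewrite ?ffunE;
  (case: (eqVneq j i) => [->|ji]; [ | by case: (hj j ji) => -> ->]).
- exact: e.
- by rewrite (bin hYi hXi) // eq_sym.
Qed.

End Final.

Theorem theorem4p1 (m r : nat) (C : {set signvec m}) :
  (r <= m)%N -> is_OM_cocircuits C -> uniform_of_rank r C ->
  [/\ is_cochain (m - r) (CM C), z2_invariant (CM C),
      cocycle (m - r) (CM C)
    & cohomologous (m - r) (CM C) (@w1pow m (m - r))].
Proof.
move=> rm hOM hU.
have icm : z2_invariant (CM C).
  move=> X; rewrite !CM_in.
  have -> : (opp_sv X \in C) = (X \in C); last by [].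
  apply/idP/idP; last exact: opp_in.
  by move/(opp_in hOM); rewrite oppK.
split => //.
- move=> X; rewrite CM_in; case: (boolP (X \in C)) => hX; last by rewrite eqxx.
  by move=> _; apply: (card_coc hU).
- exact: CM_cocycle.
case: (posnP r) => [r0|r0].
  exists (fun _ => 0); split => // X hX.
  have := max_card (supp X); rewrite card_ord hX r0 subn0 ltnn //.
case: (posnP (m - r)) => [n0|n0].
  exists (fun _ => 0); split => //.
  move=> X hX; rewrite n0 /= /cobound big1 ?addr0 // CM_in.
  have [Y hY hsY] := ex_coc hU hX.
  have h1 : #|supp X| = 1%N by rewrite hX n0.
  have [e|e] := sing_eq (esym hsY) h1.
    by rewrite e hY.
  by rewrite e opp_in.
set n := (m - r)%N in n0 *.
have sm : (n.+1 <= m)%N by rewrite /n; lia.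
pose c : cochain m := fun X => CM C X + @w1pow m n X.
have ic : z2_invariant c by move=> X; rewrite /c icm w1pow_inv.
have hc : forall X, supp X \subset P m m -> #|supp X| = n.+2 -> cobound c X = 0.
  move=> X _ hX; rewrite /c coboundD (CM_cocycle hOM hU) // (w1pow_cocycle hX).
  by rewrite addr0.
have hs : \sum_(X | Qs n.+1 X) c X = 0.
  by rewrite big_split /= half_CM // half_w1 // F2_addrr.
have [b [ib hb]] := rp (leqnn m) (ltn0Sn n) sm ic hc hs.
exists (fun X => if #|supp X| == n then b X else 0); split.
- move=> X; case: (#|supp X| =P n) => [-> _|_]; [by split | by rewrite eqxx].
- by move=> X; rewrite supp_opp ib.
move=> X hX.
have hXs : supp X \subset P m m by apply/subsetP => i _; rewrite inE ltn_ord.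
have := hb X hXs hX; rewrite /c => e.
have -> : cobound (fun X0 => if #|supp X0| == n then b X0 else 0) X = cobound b X.
  apply: eq_bigr => i hi; rewrite supp_delete card_D1 // hX eqxx //.
by rewrite -e addrCA F2_addrr addr0.
Qed.
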